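(* Every finite word accepted by $\widehat{\mathcal{T}_{p/q}}$ (i.e. labelling a path starting at state $0$) is a prefix of a span-word $M_n\ominus\mu_n$ for some $n\in\mathbb{N}$.
   Context: Let $p>q>1$ be coprime integers, $A_p=\{0,\dots,p-1\}$, $A_q=\{0,\dots,q-1\}$ and $B=\{p-(2q-1),\dots,p-1\}$. For $n\in\mathbb{N}$ and $a\in\mathbb{Z}$, let $\tau(n,a)=\frac{np+a}{q}$, defined only when $q$ divides $np+a$. Let $\mathcal{T}_{p/q}$ be the deterministic automaton with state set $\mathbb{N}$, alphabet $A_p$, initial state $0$, and transitions $n\xrightarrow{a}\tau(n,a)$ for $a\in A_p$ with $\tau(n,a)$ defined. The minimal word $\mu_n\in A_q^{\omega}$ (resp. maximal word $M_n\in\{p-q,\dots,p-1\}^{\omega}$) is the unique infinite word over $A_q$ (resp. over $\{p-q,\dots,p-1\}$) labelling a path of $\mathcal{T}_{p/q}$ starting at $n$. The span-word of $n$ is $M_n\ominus\mu_n$, with $\ominus$ letter-wise subtraction. Let $\widehat{\mathcal{T}_{p/q}}$ be the deterministic automaton with state set $\mathbb{N}$, alphabet $B$, initial state $0$, and transitions $n\xrightarrow{a}\tau(n,a)$ for $a\in B$ with $\tau(n,a)$ defined. *)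

(* Defs.v *)
From Stdlib Require Import ZArith List.
Open Scope Z_scope.

(* tau(n,a) = (n p + a)/q is defined and equals the state m
   (a natural number) : q divides n p + a and the quotient is m >= 0. *)
Definition tau_step (p q : Z) (n a m : Z) : Prop :=
  0 <= n /\ 0 <= m /\ n * p + a = q * m.

Fixpoint fin_path (p q : Z) (n : Z) (u : list Z) (m : Z) : Prop :=
  match u with
  | nil => n = m
  | a :: u' => exists n', tau_step p q n a n' /\ fin_path p q n' u' m
  end.

Definition inf_path (p q : Z) (n : Z) (w : nat -> Z) : Prop :=
  exists s : nat -> Z, s O = n /\ forall i, tau_step p q (s i) (w i) (s (S i)).

(* mu is the minimal word of n: an infinite word over A_q = {0..q-1}
   labelling a path from n (such a word is unique) *)
Definition is_min_word (p q n : Z) (mu : nat -> Z) : Prop :=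
  (forall i, 0 <= mu i <= q - 1) /\ inf_path p q n mu.

(* M is the maximal word of n: an infinite word over {p-q..p-1}
   labelling a path from n (such a word is unique) *)
Definition is_max_word (p q n : Z) (M : nat -> Z) : Prop :=
  (forall i, p - q <= M i <= p - 1) /\ inf_path p q n M.

Definition in_B (p q a : Z) : Prop := p - (2 * q - 1) <= a <= p - 1.

Definition accepted_hat (p q : Z) (u : list Z) : Prop :=
  (forall a, In a u -> in_B p q a) /\ exists m, fin_path p q 0 u m.

Definition prefix_of_diff (u : list Z) (M mu : nat -> Z) : Prop :=
  forall i, (i < length u)%nat -> nth i u 0 = M i - mu i.

(* Main.v *)
Require Import Defs.
From Stdlib Require Import ZArith List Lia Znumtheory.
Open Scope Z_scope.

Lemma inf_path_cons p q n c n' w :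
  tau_step p q n c n' -> inf_path p q n' w ->
  inf_path p q n (fun i => match i with O => c | S i => w i end).
Proof.
  intros H [s [Hs0 Hs]].
  exists (fun i => match i with O => n | S i => s i end). split; [reflexivity|].
  intros [|i]; simpl. subst. exact H. apply Hs.
Qed.

Lemma greedy p q (hq : 0 < q) (c : Z -> Z) lo hi :
  (forall n, 0 <= n -> 0 <= n*p + c n /\ (n*p + c n) mod q = 0 /\ lo <= c n <= hi) ->
  forall n, 0 <= n -> exists w, (forall i, lo <= w i <= hi) /\ inf_path p q n w.
Proof.
  intros Hc n Hn.
  set (f := fun m => (m*p + c m)/q).
  assert (Hf : forall m, 0 <= m -> 0 <= f m /\ m*p + c m = q * f m).
  { intros m Hm. destruct (Hc m Hm) as [H1 [H2 H3]]. split.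
    - apply Z.div_pos; lia.
    - apply Z.div_exact; lia. }
  set (s := fun i => Nat.iter i f n).
  assert (Hs : forall i, 0 <= s i).
  { induction i; simpl. exact Hn. apply (proj1 (Hf _ IHi)). }
  exists (fun i => c (s i)). split.
  - intro i. apply (Hc _ (Hs i)).
  - exists s. split; [reflexivity|]. intro i. unfold tau_step.
    split; [apply Hs|]. split. apply (Hs (S i)).
    change (s (S i)) with (f (s i)). apply (Hf _ (Hs i)).
Qed.

Lemma min_exists p q (hq : 0 < q) (hp : 0 < p) n : 0 <= n -> exists mu, is_min_word p q n mu.
Proof.
  intro Hn. destruct (greedy p q hq (fun m => (-(m*p)) mod q) 0 (q-1)) with (n := n)
    as [w Hw]; auto.
  - intros m Hm. pose proof (Z.mod_pos_bound (-(m*p)) q hq). split; [nia|]. split; [|lia].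
    rewrite Zplus_mod_idemp_r. replace (m*p + - (m*p)) with 0 by ring. reflexivity.
  - exists w. exact Hw.
Qed.

Lemma max_exists p q (hq : 0 < q) (hp : q < p) n : 0 <= n -> exists M, is_max_word p q n M.
Proof.
  intro Hn. destruct (greedy p q hq (fun m => p - q + (q - p - m*p) mod q) (p-q) (p-1)) with (n := n)
    as [w Hw]; auto.
  - intros m Hm. pose proof (Z.mod_pos_bound (q - p - m*p) q hq). split; [nia|]. split; [|lia].
    replace (m * p + (p - q + (q - p - m * p) mod q)) with ((m*p + p - q) + (q - p - m * p) mod q) by ring.
    rewrite Zplus_mod_idemp_r. replace (m*p + p - q + (q - p - m*p)) with 0 by ring. reflexivity.
  - exists w. exact Hw.
Qed.

Lemma key p q (hq : 1 < q) (hpq : q < p) (hcop : Z.gcd p q = 1) (u : list Z) :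
  forall e m, 0 <= e -> (forall a, In a u -> in_B p q a) -> fin_path p q e u m ->
  exists t Q, 0 <= t /\ 0 < Q /\ Z.gcd Q p = 1 /\
    forall j, 0 <= j -> exists mu M,
      is_min_word p q (t + j*Q) mu /\ is_max_word p q (t + j*Q + e) M /\ prefix_of_diff u M mu.
Proof.
  induction u as [|a u IH]; intros e m He HB Hp.
  - exists 0, 1. split; [lia|]. split; [lia|]. split; [apply Z.gcd_1_l|].
    intros j Hj. destruct (min_exists p q ltac:(lia) ltac:(lia) (0 + j*1)) as [mu Hmu]; [lia|].
    destruct (max_exists p q ltac:(lia) hpq (0 + j*1 + e)) as [M HM]; [lia|].
    exists mu, M. split; [exact Hmu|]. split; [exact HM|]. intros i Hi; simpl in Hi; lia.
  - simpl in Hp. destruct Hp as [e' [[He0 [He'0 Hstep]] Hp']].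
    assert (HBa : in_B p q a) by (apply HB; left; reflexivity).
    unfold in_B in HBa.
    destruct (IH e' m He'0 (fun x Hx => HB x (or_intror Hx)) Hp') as [t' [Q [Ht' [HQ [HgQ Hfam]]]]].
    set (mu0 := Z.max 0 (p - q - a)).
    assert (Hmu0 : 0 <= mu0 <= q - 1 /\ p - q <= mu0 + a <= p - 1) by (unfold mu0; lia).
    assert (Hg : Z.gcd (q*Q) p = 1).
    { apply Zgcd_1_rel_prime. apply rel_prime_sym. apply rel_prime_mult.
      - apply Zgcd_1_rel_prime. exact hcop.
      - apply Zgcd_1_rel_prime. rewrite Z.gcd_comm. exact HgQ. }
    destruct (Z.gcd_bezout (q*Q) p 1 Hg) as [x [y Hxy]].
    set (j0 := (x*(mu0 - q*t')) mod p + p).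
    assert (Hj0 : p <= j0).
    { unfold j0. pose proof (Z.mod_pos_bound (x*(mu0 - q*t')) p ltac:(lia)). lia. }
    set (t2 := t' + j0 * Q).
    assert (Hdiv : (q*t2 - mu0) mod p = 0).
    { unfold t2, j0.
      replace (q * (t' + ((x * (mu0 - q * t')) mod p + p) * Q) - mu0)
        with ((q*t' - mu0 + q*Q*p) + (q*Q) * ((x * (mu0 - q * t')) mod p)) by ring.
      rewrite Z.add_mod by lia. rewrite (Z.mul_mod (q*Q)) by lia.
      rewrite Z.mod_mod by lia. rewrite <- Z.mul_mod by lia.
      rewrite <- Z.add_mod by lia.
      replace (q * t' - mu0 + q * Q * p + q * Q * (x * (mu0 - q * t')))
        with ((q*t' - mu0) * (1 - x*(q*Q)) + Q*q*p) by ring.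
      replace (1 - x * (q*Q)) with (y*p) by lia.
      replace ((q * t' - mu0) * (y * p) + Q * q * p) with (((q*t'-mu0)*y + Q*q)*p) by ring.
      apply Z.mod_mul. lia. }
    set (t := (q*t2 - mu0)/p).
    assert (Ht : q*t2 - mu0 = p * t) by (apply Z.div_exact; lia).
    assert (Ht2 : Q <= t2) by (unfold t2; nia).
    assert (Htpos : 0 <= t) by nia.
    clearbody t. unfold t2 in *. clearbody j0.
    exists t, (q*Q). split; [nia|]. split; [nia|]. split; [exact Hg|].
    intros j Hj.
    destruct (Hfam (j0 + j*p) ltac:(nia)) as [mu' [M' [Hmu' [HM' Hpre]]]].
    exists (fun i => match i with O => mu0 | S i => mu' i end).
    exists (fun i => match i with O => mu0 + a | S i => M' i end).
    split; [|split].
    + split.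
      * intros [|i]; [lia|]. apply (proj1 Hmu').
      * apply inf_path_cons with (n' := t' + (j0 + j*p)*Q); [|apply (proj2 Hmu')].
        unfold tau_step.
        assert (0 <= j*(q*Q)) by (apply Z.mul_nonneg_nonneg; nia).
        assert (0 <= (j0 + j*p)*Q) by (apply Z.mul_nonneg_nonneg; nia).
        split; [lia|]. split; [lia|].
        replace ((t + j*(q*Q))*p) with (p*t + j*q*Q*p) by ring. rewrite <- Ht. ring.
    + split.
      * intros [|i]; [lia|]. apply (proj1 HM').
      * apply inf_path_cons with (n' := t' + (j0 + j*p)*Q + e'); [|apply (proj2 HM')].
        unfold tau_step.
        assert (0 <= j*(q*Q)) by (apply Z.mul_nonneg_nonneg; nia).
        assert (0 <= (j0 + j*p)*Q) by (apply Z.mul_nonneg_nonneg; nia).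
        split; [lia|]. split; [lia|].
        replace ((t + j*(q*Q) + e)*p + (mu0 + a)) with (p*t + j*q*Q*p + (e*p + a) + mu0) by ring.
        rewrite <- Ht, Hstep. ring.
    + intros [|i] Hi; simpl. lia. apply Hpre. simpl in Hi. lia.
Qed.

Theorem mainTheorem8 (p q : Z) (hq : 1 < q) (hpq : q < p) (hcop : Z.gcd p q = 1)
  (u : list Z) :
  accepted_hat p q u ->
  exists n : Z, 0 <= n /\
    exists mu M : nat -> Z,
      is_min_word p q n mu /\ is_max_word p q n M /\ prefix_of_diff u M mu.
Proof.
  intros [HB [m Hp]].
  destruct (key p q hq hpq hcop u 0 m ltac:(lia) HB Hp) as [t [Q [Ht [HQ [_ Hfam]]]]].
  destruct (Hfam 0 ltac:(lia)) as [mu [M [H1 [H2 H3]]]].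
  exists t. split; [exact Ht|]. exists mu, M.
  replace (t + 0*Q) with t in H1 by ring. replace (t + 0*Q + 0) with t in H2 by ring.
  auto.
Qed.
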